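(* Let $\mathcal{I}$ be a countable nonempty set of database instances, $\mathcal{L}$ a query language, $f$ a set function on subsets of $\mathcal{I}$ with nonnegative real values, and let $p$ be the answer-dependent pricing function $p(\mathbf{Q},E)=f(\overline{\mathcal{S}}_{\mathbf{Q}}(E))$ for $\mathbf{Q}\in B(\mathcal{L})$, $E\in\{\mathbf{Q}(D):D\in\mathcal{I}\}$. The following are equivalent: (1) $p$ has no bundle arbitrage; (2) $f$ is subadditive over every semilattice $\mathcal{S}^{\mathcal{L}}_D$, $D\in\mathcal{I}$.
   Context: A query is a deterministic function on $\mathcal{I}$. A query bundle $\mathbf{Q}=(Q_1,\dots,Q_n)$ is a finite tuple of queries from $\mathcal{L}$, with $\mathbf{Q}(D)=(Q_1(D),\dots,Q_n(D))$; $B(\mathcal{L})$ is the set of all finite query bundles, closed under union (concatenation) $\mathbf{Q}_1,\mathbf{Q}_2$. $p$ has no bundle arbitrage if for every $D\in\mathcal{I}$ and all $\mathbf{Q}_1,\mathbf{Q}_2\in B(\mathcal{L})$, with $\mathbf{Q}=\mathbf{Q}_1,\mathbf{Q}_2$, we have $p(\mathbf{Q},\mathbf{Q}(D))\le p(\mathbf{Q}_1,\mathbf{Q}_1(D))+p(\mathbf{Q}_2,\mathbf{Q}_2(D))$. The conflict set is $\overline{\mathcal{S}}_{\mathbf{Q}}(E)=\{D'\in\mathcal{I}:\mathbf{Q}(D')\neq E\}$. For $D\in\mathcal{I}$, $\mathcal{S}^{\mathcal{L}}_D=\{\overline{\mathcal{S}}_{\mathbf{Q}}(\mathbf{Q}(D)):\mathbf{Q}\in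 B(\mathcal{L})\}$, a join-semilattice under inclusion with join $\cup$. $f$ is subadditive over $\mathcal{S}^{\mathcal{L}}_D$ if $f(A\cup B)\le f(A)+f(B)$ for all $A,B\in\mathcal{S}^{\mathcal{L}}_D$. *)

(* Defs.v *)
From Stdlib Require Import Reals List.
Import ListNotations.
Open Scope R_scope.

Definition query (Inst Ans : Type) := Inst -> Ans.

Definition bundle_in {Inst Ans : Type} (L : query Inst Ans -> Prop)
  (Q : list (query Inst Ans)) : Prop := Forall L Q.

Definition eval_bundle {Inst Ans : Type} (Q : list (query Inst Ans)) (D : Inst)
  : list Ans := map (fun q => q D) Q.

Definition conflict_set {Inst Ans : Type} (Q : list (query Inst Ans))
  (E : list Ans) : Inst -> Prop := fun D' => eval_bundle Q D' <> E.

Definition price {Inst Ans : Type} (f : (Inst -> Prop) -> R)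
  (Q : list (query Inst Ans)) (E : list Ans) : R := f (conflict_set Q E).

(* no bundle arbitrage (bundle union = concatenation) *)
Definition no_bundle_arbitrage {Inst Ans : Type} (L : query Inst Ans -> Prop)
  (p : list (query Inst Ans) -> list Ans -> R) : Prop :=
  forall (D : Inst) (Q1 Q2 : list (query Inst Ans)),
    bundle_in L Q1 -> bundle_in L Q2 ->
    p (Q1 ++ Q2) (eval_bundle (Q1 ++ Q2) D)
      <= p Q1 (eval_bundle Q1 D) + p Q2 (eval_bundle Q2 D).

Definition semilattice {Inst Ans : Type} (L : query Inst Ans -> Prop) (D : Inst)
  (A : Inst -> Prop) : Prop :=
  exists Q, bundle_in L Q /\ A = conflict_set Q (eval_bundle Q D).

Definition set_union {Inst : Type} (A B : Inst -> Prop) : Inst -> Prop :=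
  fun x => A x \/ B x.

Definition subadditive_over {Inst : Type} (S : (Inst -> Prop) -> Prop)
  (f : (Inst -> Prop) -> R) : Prop :=
  forall A B, S A -> S B -> f (set_union A B) <= f A + f B.

Definition countable_nonempty (Inst : Type) : Prop :=
  (exists g : nat -> Inst, forall x, exists n, g n = x) /\ inhabited Inst.

(* Main.v *)
Require Import Defs.
From Stdlib Require Import Reals List.
From Stdlib Require Import FunctionalExtensionality PropExtensionality Classical.
Open Scope R_scope.

Lemma app_len_inv {A : Type} (a b c d : list A) :
  a ++ b = c ++ d -> length a = length c -> a = c /\ b = d.
Proof.
  revert c; induction a as [|x a IH]; intros [|y c] E Hl; simpl in *;
    try discriminate; auto.
  injection E as -> E. injection Hl as Hl. destruct (IH c E Hl) as [-> ->]. auto.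
Qed.

Lemma cs_app {Inst Ans : Type} (Q1 Q2 : list (query Inst Ans)) (D : Inst) :
  conflict_set (Q1 ++ Q2) (eval_bundle (Q1 ++ Q2) D) =
  set_union (conflict_set Q1 (eval_bundle Q1 D)) (conflict_set Q2 (eval_bundle Q2 D)).
Proof.
  apply functional_extensionality; intro x.
  apply propositional_extensionality.
  unfold conflict_set, set_union, eval_bundle.
  rewrite !map_app. split.
  - intro H. destruct (classic (map (fun q => q x) Q1 = map (fun q => q D) Q1)) as [E1|E1].
    + right. intro E2. apply H. f_equal; assumption.
    + left. exact E1.
  - intros [H|H] E; apply app_len_inv in E; try (rewrite !length_map; reflexivity);
      destruct E; tauto.
Qed.

Theorem theorem2 (Inst Ans : Type) (L : query Inst Ans -> Prop)
  (f : (Inst -> Prop) -> R)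
  (HI : countable_nonempty Inst)
  (Hf : forall A, 0 <= f A) :
  no_bundle_arbitrage L (price f) <->
  (forall D : Inst, subadditive_over (semilattice L D) f).
Proof.
  split.
  - intros H D A B [Q1 [H1 ->]] [Q2 [H2 ->]].
    rewrite <- cs_app. apply (H D Q1 Q2 H1 H2).
  - intros H D Q1 Q2 H1 H2. unfold price. rewrite cs_app.
    apply (H D); [exists Q1 | exists Q2]; split; auto.
Qed.
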